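(* Let $n\ge1$, $k\ge1$ and take weights $a_j=1/j$. Then \[ \mathbb E(S_{n,k})=\frac{1}{\zeta^\star_n(\{1\}_k)}\sum_{\ell=0}^{k-2}H_n^{(\ell+2)}\,\zeta^\star_n(\{1\}_{k-\ell-2}) \] (the sum being empty, hence $0$, for $k=1$).
   Context: For $\vec\ell=(\ell_1,\dots,\ell_k)$ with $n\ge\ell_1\ge\cdots\ge\ell_k\ge1$ let $\sigma(\vec\ell)=|\{1\le j\le k-1:\ell_j=\ell_{j+1}\}|$. With $a_j=1/j$, $\theta_{n;k}(t)=\zeta^t_n(\{1\}_k)=\sum_{n\ge\ell_1\ge\cdots\ge\ell_k\ge1}t^{\sigma(\vec\ell)}\prod_i\ell_i^{-1}$, and $S_{n,k}$ is the random variable with $\mathbb P\{S_{n,k}=j\}=[t^j]\theta_{n;k}(t)/\theta_{n;k}(1)$. $\zeta^\star_n(\{1\}_k)=\theta_{n;k}(1)$, with $\zeta^\star_n(\{1\}_0)=1$; $H_n^{(i)}=\sum_{m=1}^nm^{-i}$. *)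

(* Defs.v *)
From HB Require Import structures.
From mathcomp Require Import all_boot all_order all_algebra.
Set Implicit Arguments. Unset Strict Implicit. Unset Printing Implicit Defensive.
Import Order.TTheory GRing.Theory Num.Theory.
Local Open Scope ring_scope.

(* An index vector  n >= l_1 >= ... >= l_k >= 1  is encoded as
   f : {ffun 'I_k -> 'I_n}, with l_(i+1) = (f i).+1 (i zero-based). *)
Definition ell (n k : nat) (f : {ffun 'I_k -> 'I_n}) (i : 'I_k) : nat := (f i).+1.

Definition nonincr (n k : nat) (f : {ffun 'I_k -> 'I_n}) : bool :=
  [forall i : 'I_k, forall j : 'I_k, (i <= j)%N ==> (ell f j <= ell f i)%N].

Definition ellseq (n k : nat) (f : {ffun 'I_k -> 'I_n}) : seq nat :=
  [seq ell f i | i <- enum 'I_k].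

(* sigma(l) = #{ 1 <= j <= k-1 : l_j = l_(j+1) } (here j zero-based, j < k-1) *)
Definition sigma (n k : nat) (f : {ffun 'I_k -> 'I_n}) : nat :=
  count (fun j => nth 0%N (ellseq f) j == nth 0%N (ellseq f) j.+1) (iota 0 k.-1).

Definition wprod (n k : nat) (f : {ffun 'I_k -> 'I_n}) : rat :=
  \prod_(i < k) ((ell f i)%:R)^-1.

Definition theta (n k : nat) : {poly rat} :=
  \sum_(f : {ffun 'I_k -> 'I_n} | nonincr f) (wprod f)%:P * 'X^(sigma f).

(* zeta^star_n({1}_k) = sum_{n >= l_1 >= ... >= l_k >= 1} prod_i 1/l_i
   (equals 1 for k = 0: the empty tuple) *)
Definition zeta_star (n k : nat) : rat :=
  \sum_(f : {ffun 'I_k -> 'I_n} | nonincr f) wprod f.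

(* P{S_{n,k} = j} = [t^j] theta_{n;k}(t) / theta_{n;k}(1) *)
Definition probS (n k j : nat) : rat := (theta n k)`_j / (theta n k).[1].

(* E(S_{n,k}) = sum_j j P{S_{n,k} = j}; the support lies in [0, size theta) *)
Definition expS (n k : nat) : rat :=
  \sum_(j < size (theta n k)) j%:R * probS n k j.

Definition harm (n i : nat) : rat := \sum_(1 <= m < n.+1) (m%:R ^+ i)^-1.

(* Main.v *)
Require Import Defs.
From HB Require Import structures.
From mathcomp Require Import all_boot all_order all_algebra.
From mathcomp Require Import ring zify.
Import Order.TTheory GRing.Theory Num.Theory.
Local Open Scope ring_scope.

Fixpoint enumS (n k : nat) : seq (seq nat) :=
  match k with
  | 0 => [:: [::]]
  | k'.+1 => [seq a :: t | a <- index_iota 1 n.+1, t <- enumS a k']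
  end.

Definition wp (s : seq nat) : rat := \prod_(x <- s) (x%:R)^-1.
Definition sigS (s : seq nat) : nat :=
  count (fun j => nth 0%N s j == nth 0%N s j.+1) (iota 0 (size s).-1).
Definition hd_eq (a : nat) (t : seq nat) : nat :=
  if t is b :: _ then (a == b) : nat else 0%N.

Lemma sigS_cons a t : sigS (a :: t) = (hd_eq a t + sigS t)%N.
Proof.
rewrite /sigS /=; case: t => [|b t] //=.
rewrite -(addn0 1%N) iotaDl count_map /=.
by congr (_ + _)%N; apply: eq_count.
Qed.

Definition Zs n k := \sum_(s <- enumS n k) wp s.
Definition Ds n k := \sum_(s <- enumS n k) (sigS s)%:R * wp s.

Lemma Zs0 n : Zs n 0 = 1.
Proof. by rewrite /Zs /= big_seq1 /wp big_nil. Qed.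
Lemma Ds0 n : Ds n 0 = 0.
Proof. by rewrite /Ds /= big_seq1 mul0r. Qed.

Lemma ZsS n k : Zs n k.+1 = \sum_(1 <= a < n.+1) (a%:R)^-1 * Zs a k.
Proof.
rewrite /Zs /= big_allpairs_dep; apply: eq_bigr => a _.
by rewrite mulr_sumr; apply: eq_bigr => t _; rewrite /wp big_cons.
Qed.

Lemma DsS n k : Ds n k.+1 = \sum_(1 <= a < n.+1) (a%:R)^-1 *
   (Ds a k + if k is k'.+1 then (a%:R)^-1 * Zs a k' else 0).
Proof.
rewrite /Ds /= big_allpairs_dep big_seq [RHS]big_seq; apply: eq_bigr => a.
rewrite mem_index_iota => /andP [a1 _].
have -> : (if k is k'.+1 then (a%:R)^-1 * Zs a k' else 0) =
   \sum_(t <- enumS a k) (hd_eq a t)%:R * wp t.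
  case: k => [|k]; first by rewrite /= big_seq1 mul0r.
  rewrite /= big_allpairs_dep /Zs.
  rewrite (big_cat_nat _ (n:=a)) //= big_nat1.
  rewrite [X in _ = X + _]big_nat_cond [X in _ = X + _]big1 ?add0r; last first.
    move=> b /andP [/andP [_ hb] _]; rewrite big1 // => t _.
    have -> : (a == b) = false by apply/negbTE; rewrite neq_ltn hb orbT.
    by rewrite mul0r.
  by rewrite mulr_sumr; apply: eq_bigr => t _; rewrite eqxx /wp big_cons mul1r.
rewrite -big_split /= mulr_sumr; apply: eq_bigr => t _.
rewrite sigS_cons /wp big_cons natrD; ring.
Qed.

Lemma ZsN n j : Zs n.+1 j.+1 = Zs n j.+1 + ((n.+1)%:R)^-1 * Zs n.+1 j.
Proof. by rewrite !ZsS big_nat_recr. Qed.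

Lemma Zs_exp n m : Zs n.+1 m = \sum_(l < m.+1) ((n.+1)%:R ^+ l)^-1 * Zs n (m - l).
Proof.
elim: m => [|m IH]; first by rewrite big_ord1 !Zs0 expr0 invr1 mul1r.
rewrite ZsN IH mulr_sumr [RHS]big_ord_recl expr0 invr1 mul1r subn0; congr (_ + _).
apply: eq_bigr => i _; rewrite /= subSS exprS invfM; ring.
Qed.

Lemma harmS n i : harm n.+1 i = harm n i + ((n.+1)%:R ^+ i)^-1.
Proof. by rewrite /harm big_nat_recr. Qed.

Lemma harm0 i : harm 0 i = 0.
Proof. by rewrite /harm big_geq. Qed.

Definition Rs n k := \sum_(l < k.-1) harm n (l + 2) * Zs n (k - l - 2).

Lemma Rs_rec n k : Rs n.+1 k.+1 = Rs n k.+1 + ((n.+1)%:R)^-1 *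
   (Rs n.+1 k + if k is k'.+1 then ((n.+1)%:R)^-1 * Zs n.+1 k' else 0).
Proof.
case: k => [|m]; first by rewrite /Rs !big_ord0; ring.
set c := ((n.+1)%:R)^-1 : rat.
set A := \sum_(l < m.+1) harm n.+1 (l + 2) * Zs n (m - l).
set B := \sum_(l < m) harm n.+1 (l + 2) * Zs n.+1 (m - l - 1).
have EB : Rs n.+1 m.+1 = B.
  by rewrite /Rs /=; apply: eq_bigr => l _; congr (_ * Zs _ _); lia.
have E1 : Rs n.+1 m.+2 = A + c * B.
  rewrite /Rs /= big_ord_recr /A /B big_ord_recr /=.
  have -> : (m.+2 - m - 2 = 0)%N by lia.
  rewrite subnn !Zs0 mulr_sumr addrAC -big_split /=; congr (_ + _); apply: eq_bigr => l _.
  have hl := ltn_ord l.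
  set j := (m - l - 1)%N.
  have -> : (m.+2 - l - 2 = j.+1)%N by rewrite /j; lia.
  have -> : (m - l = j.+1)%N by rewrite /j; lia.
  rewrite ZsN -/c; ring.
have E2 : A = Rs n m.+2 + c * (c * Zs n.+1 m).
  rewrite /A Zs_exp /Rs /= mulr_sumr mulr_sumr -big_split /=; apply: eq_bigr => l _.
  rewrite harmS exprD expr2 !invfM -/c.
  have -> : (m.+2 - l - 2 = m - l)%N by lia.
  ring.
by rewrite E1 E2 EB; ring.
Qed.

Lemma Ds_Rs n k : Ds n k = Rs n k.
Proof.
elim: n k => [|n IHn] k.
  case: k => [|k]; first by rewrite Ds0 /Rs big_ord0.
  rewrite /Rs DsS big_geq //; apply/esym/big1 => l _; by rewrite harm0 mul0r.
elim: k => [|k IHk]; first by rewrite Ds0 /Rs big_ord0.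
rewrite Rs_rec -IHk -IHn DsS big_nat_recr //=.
congr (_ + _); rewrite -DsS.
by case: k {IHk}.
Qed.

Section Link.
Variables n k : nat.
Implicit Types f : {ffun 'I_k -> 'I_n}.

Lemma size_ellseq f : size (ellseq f) = k.
Proof. by rewrite /ellseq size_map size_enum_ord. Qed.

Lemma nth_ellseq f (i : 'I_k) : nth 0%N (ellseq f) i = ell f i.
Proof. by rewrite /ellseq (nth_map i) ?size_enum_ord ?ltn_ord // nth_ord_enum. Qed.

Lemma ellseq_inj : injective (@ellseq n k).
Proof.
move=> f g e; apply/ffunP => i; apply: val_inj.
have := nth_ellseq f i; rewrite e nth_ellseq /ell => -[]. done.
Qed.

Lemma wprodE f : wprod f = wp (ellseq f).
Proof. by rewrite /wprod /wp /ellseq big_map big_enum. Qed.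

Lemma sigmaE f : sigma f = sigS (ellseq f).
Proof. by rewrite /sigma /sigS size_ellseq. Qed.

Lemma geq_tr : transitive geq.
Proof. move=> y x z /= h1 h2; exact: leq_trans h2 h1. Qed.
Lemma geq_rf : reflexive geq.
Proof. by move=> x /=. Qed.

Lemma nonincr_sorted f : nonincr f = sorted geq (ellseq f).
Proof.
apply/idP/idP.
  move/forallP => H; apply/(sortedP 0%N) => i hi; rewrite size_ellseq in hi.
  have hi0 : (i < k)%N by lia.
  rewrite (nth_ellseq f (Ordinal hi0)) (nth_ellseq f (Ordinal hi)) /=.
  by have /forallP /(_ (Ordinal hi)) /implyP /(_ (leqnSn i)) := H (Ordinal hi0).
move=> hs; apply/forallP=> i; apply/forallP=> j; apply/implyP=> hij.
have := sorted_leq_nth geq_tr geq_rf 0%N hs i j.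
rewrite !inE !size_ellseq !ltn_ord !nth_ellseq => /(_ isT isT hij) //.
Qed.
End Link.

Fixpoint goodR (n : nat) (s : seq nat) : bool :=
  if s is a :: t then ((0 < a <= n)%N && goodR a t) else true.

Lemma goodRE n s : goodR n s = all (fun x => 0 < x <= n)%N s && sorted geq s.
Proof.
elim: s n => [//|a t IH] n /=.
rewrite IH path_sortedE; last exact: geq_tr.
case ha: (0 < a <= n)%N => //=.
rewrite andbA; congr (_ && _); rewrite -all_predI; apply: eq_all => x /=.
by apply/idP/idP; lia.
Qed.

Lemma memS n k s : (s \in enumS n k) = (size s == k) && goodR n s.
Proof.
elim: k n s => [|k IH] n s.
  by case: s.
apply/allpairsPdep/idP.
  case=> a [t [ha ht ->]] /=; rewrite eqSS -andbA; rewrite IH in ht.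
  by rewrite mem_index_iota in ha; case/andP: ht => -> ->; rewrite andbT.
case: s => [|a t] //= /andP [sz /andP [ha gt]].
exists a, t; split => //; first by rewrite mem_index_iota.
by rewrite IH -eqSS sz.
Qed.

Lemma uniq_enumS n k : uniq (enumS n k).
Proof.
elim: k n => [|k IH] n //=.
apply: allpairs_uniq_dep; first exact: iota_uniq.
  by move=> a _; exact: IH.
by move=> [a t] [b u] _ _ /= [eab etu]; subst.
Qed.

Lemma link n k (F : seq nat -> rat) :
  \sum_(f : {ffun 'I_k -> 'I_n} | nonincr f) F (ellseq f) = \sum_(s <- enumS n k) F s.
Proof.
rewrite -big_filter -(big_map (@ellseq n k) xpredT F); apply: perm_big.
apply: uniq_perm.
- rewrite map_inj_uniq ?filter_uniq ?index_enum_uniq //; exact: ellseq_inj.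
- exact: uniq_enumS.
move=> s; apply/mapP/idP.
  case=> f; rewrite mem_filter => /andP [hf _] ->.
  rewrite memS size_ellseq eqxx /= goodRE -nonincr_sorted hf andbT.
  by apply/allP => x /mapP [i _ ->]; rewrite /ell ltn_ord.
rewrite memS goodRE => /andP [/eqP sz /andP [ha hs]].
have P1 : forall i : 'I_k, (0 < nth 0%N s i <= n)%N.
  by move=> i; apply: (allP ha); rewrite mem_nth // sz.
have P : forall i : 'I_k, ((nth 0%N s i).-1 < n)%N.
  by move=> i; have := P1 i; lia.
pose f := [ffun i => Ordinal (P i)].
have ef : ellseq f = s.
  apply: (@eq_from_nth _ 0%N); first by rewrite size_ellseq sz.
  move=> i; rewrite size_ellseq => hi.
  rewrite (@nth_ellseq n k f (Ordinal hi)) /ell ffunE /=.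
  by have := P1 (Ordinal hi); simpl; lia.
exists f => //; rewrite mem_filter mem_index_enum andbT nonincr_sorted ef //.
Qed.

Lemma zetaE n m : zeta_star n m = Zs n m.
Proof.
rewrite /zeta_star /Zs -(link n m wp); apply: eq_bigr => f _; exact: wprodE.
Qed.

Theorem mainTheorem13 (n k : nat) (hn : (1 <= n)%N) (hk : (1 <= k)%N) :
  expS n k =
  (zeta_star n k)^-1 *
    \sum_(l < k.-1) harm n (l + 2) * zeta_star n (k - l - 2).
Proof.
have Z : (theta n k).[1] = zeta_star n k.
  rewrite /theta horner_sum; apply: eq_bigr => f _.
  by rewrite hornerCM hornerXn expr1n mulr1.
have C j : (theta n k)`_j = \sum_(f : {ffun 'I_k -> 'I_n} | nonincr f) wprod f * (j == sigma f)%:R.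
  by rewrite /theta coef_sum; apply: eq_bigr => f _; rewrite coefCM coefXn.
have D : \sum_(j < size (theta n k)) j%:R * (theta n k)`_j =
         \sum_(f : {ffun 'I_k -> 'I_n} | nonincr f) (sigma f)%:R * wprod f.
  set N := (size (theta n k) + k)%N.
  rewrite (big_ord_widen N (fun j : nat => j%:R * (theta n k)`_j)) ?leq_addr // big_mkcond /=.
  transitivity (\sum_(j < N) j%:R * (theta n k)`_j).
    apply: eq_bigr => j _; case: ifP => // /negbT; rewrite -leqNgt => hj.
    by rewrite nth_default ?mulr0.
  transitivity (\sum_(j < N) \sum_(f : {ffun 'I_k -> 'I_n} | nonincr f)
       (j%:R * (wprod f * ((j : nat) == sigma f)%:R))).
    by apply: eq_bigr => j _; rewrite -mulr_sumr -C.
  rewrite exchange_big /=; apply: eq_bigr => f hf.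
  have hs : (sigma f < N)%N.
    have : (sigma f <= k.-1)%N by rewrite /sigma -[X in (_ <= X)%N](size_iota 0) count_size.
    rewrite /N; lia.
  rewrite (bigD1 (Ordinal hs)) //= eqxx mulr1 big1 ?addr0; first by rewrite mulrC.
  move=> j hj; have -> : (j == sigma f :> nat) = false.
    by apply/negbTE; apply: contra hj => /eqP e; apply/eqP/val_inj.
  by rewrite mulr0 mulr0.
rewrite /expS /probS.
under eq_bigr do rewrite mulrA.
rewrite -mulr_suml D Z mulrC; congr (_ * _).
transitivity (Ds n k).
  rewrite /Ds -(link n k (fun s => (sigS s)%:R * wp s)).
  by apply: eq_bigr => f _; rewrite sigmaE wprodE.
rewrite Ds_Rs /Rs; apply: eq_bigr => l _; by rewrite zetaE.
Qed.
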